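(* Fix $\alpha,m,\tau,k,\gamma>0$ and define for $\lambda>0$ $$\varphi(\lambda)=\frac{\alpha}{2m}\cdot\frac{1}{1+\dfrac{\gamma\tau\lambda+k}{\gamma\lambda(\gamma\tau\lambda+k)+k^2m\lambda}},$$ so that $\|H_{\mathrm{DAPI}}\|_2^2=\sum_{n=2}^N\varphi(\lambda_n)$ where $\lambda_2,\dots,\lambda_N$ are the nonzero eigenvalues of $L_B$. Then $\varphi$ is strictly increasing on $(0,\infty)$. Consequently, if $\mathcal G,\mathcal G'$ are connected graphs on $N$ nodes whose weighted Laplacians have ordered eigenvalues satisfying $\lambda_n\le\lambda_n'$ for all $n$, then $\|H_{\mathrm{DAPI}}\|_2^2$ for $\mathcal G$ is at most that for $\mathcal G'$, whereas $\|H_{\mathrm{std}}\|_2^2=\frac{\alpha}{2m}(N-1)$ does not depend on the graph.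
   Context: $H_{\mathrm{std}}$ and $H_{\mathrm{DAPI}}$ are the linear systems: $H_{\mathrm{std}}$: $\dot\theta=\omega$, $\dot\omega=-\tfrac m\tau L_B\theta-\tfrac1\tau\omega+\tfrac1\tau w$, $y=L_G^{1/2}\theta$; $H_{\mathrm{DAPI}}$: $\dot\theta=\omega$, $\dot\omega=-\tfrac m\tau L_B\theta-\tfrac1\tau\omega+\tfrac1\tau\Omega+\tfrac1\tau w$, $\dot\Omega=-\tfrac1k\omega-\tfrac1k\gamma L_B\Omega$, $y=L_G^{1/2}\theta$, with $L_B$ the weighted Laplacian of a connected graph with positive edge weights and $L_G=\alpha L_B$. $\|H\|_2^2:=\int_0^\infty\operatorname{tr}(Ce^{At}BB^Te^{A^Tt}C^T)\,dt$. *)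

(* Defs.v *)
From Stdlib Require Import Reals Lra Lia.
Open Scope R_scope.

Definition phi (alpha m tau k gamma lam : R) : R :=
  (alpha / (2 * m)) *
  / (1 + (gamma * tau * lam + k) /
         (gamma * lam * (gamma * tau * lam + k) + k ^ 2 * m * lam)).

(* ||H_DAPI||_2^2 = sum_{n=2}^N phi(lambda_n), lam indexed by n = 1..N. *)
Definition h2_dapi_sq (alpha m tau k gamma : R) (N : nat) (lam : nat -> R) : R :=
  sum_f 2 N (fun n => phi alpha m tau k gamma (lam n)).

Definition phi_std (alpha m : R) (lam : R) : R := alpha / (2 * m).

Definition h2_std_sq (alpha m : R) (N : nat) (lam : nat -> R) : R :=
  sum_f 2 N (fun n => phi_std alpha m (lam n)).

Definition connected_laplacian_spectrum (N : nat) (lam : nat -> R) : Prop :=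
  lam 1%nat = 0 /\
  (forall n, (2 <= n <= N)%nat -> 0 < lam n) /\
  (forall n, (1 <= n)%nat -> (n < N)%nat -> lam n <= lam (S n)).

(* Main.v *)
Require Import Defs.
From Stdlib Require Import Reals Lra Lia.
Open Scope R_scope.

Lemma phi_mono (alpha m tau k gamma : R)
  (Ha : 0 < alpha) (Hm : 0 < m) (Ht : 0 < tau) (Hk : 0 < k) (Hg : 0 < gamma) :
  forall x y, 0 < x -> x < y ->
     phi alpha m tau k gamma x < phi alpha m tau k gamma y.
Proof.
  intros x y Hx Hxy. unfold phi.
  assert (Hy : 0 < y) by lra.
  set (a := gamma * tau). assert (Hap : 0 < a) by (unfold a; nra).
  assert (Nx : 0 < a * x + k) by nra.
  assert (Ny : 0 < a * y + k) by nra.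
  assert (Dx : 0 < gamma * x * (a * x + k) + k ^ 2 * m * x).
  { assert (0 < gamma * x * (a*x+k)) by (apply Rmult_lt_0_compat; nra).
    assert (0 < k^2*m*x) by (apply Rmult_lt_0_compat; [apply Rmult_lt_0_compat|]; nra). lra. }
  assert (Dy : 0 < gamma * y * (a * y + k) + k ^ 2 * m * y).
  { assert (0 < gamma * y * (a*y+k)) by (apply Rmult_lt_0_compat; nra).
    assert (0 < k^2*m*y) by (apply Rmult_lt_0_compat; [apply Rmult_lt_0_compat|]; nra). lra. }
  assert (Hc : 0 < alpha / (2 * m)) by (apply Rdiv_lt_0_compat; lra).
  apply Rmult_lt_compat_l; [exact Hc|].
  assert (G : (a * y + k) / (gamma * y * (a * y + k) + k ^ 2 * m * y) <
              (a * x + k) / (gamma * x * (a * x + k) + k ^ 2 * m * x)).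
  { apply (Rmult_lt_reg_r ((gamma * y * (a * y + k) + k ^ 2 * m * y) *
                          (gamma * x * (a * x + k) + k ^ 2 * m * x))).
    - apply Rmult_lt_0_compat; assumption.
    - field_simplify; try lra.
      assert (E : (a * x + k) * (gamma * y * (a * y + k) + k ^ 2 * m * y)
                - (a * y + k) * (gamma * x * (a * x + k) + k ^ 2 * m * x)
                = (y - x) * (gamma * (a*x+k) * (a*y+k) + k^3 * m)) by ring.
      assert (P : 0 < (y - x) * (gamma * (a*x+k) * (a*y+k) + k^3 * m)).
      { apply Rmult_lt_0_compat; [lra|].
        assert (0 < gamma * (a*x+k) * (a*y+k)) by
          (apply Rmult_lt_0_compat; [apply Rmult_lt_0_compat|]; lra).
        assert (0 < k^3*m) by (apply Rmult_lt_0_compat; [apply pow_lt|]; lra).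
        lra. }
      nra. }
  apply Rinv_lt_contravar.
  - apply Rmult_lt_0_compat.
    + assert (0 <= (a * y + k) / (gamma * y * (a * y + k) + k ^ 2 * m * y)).
      { left. apply Rdiv_lt_0_compat; lra. } lra.
    + assert (0 <= (a * x + k) / (gamma * x * (a * x + k) + k ^ 2 * m * x)).
      { left. apply Rdiv_lt_0_compat; lra. } lra.
  - lra.
Qed.

Lemma sum_const_aux (c : R) (n : nat) : sum_f_R0 (fun _ => c) n = c * INR (S n).
Proof.
  induction n; simpl sum_f_R0.
  - simpl; lra.
  - rewrite IHn. rewrite (S_INR (S n)). ring.
Qed.

Theorem mainTheorem3 (alpha m tau k gamma : R)
  (Ha : 0 < alpha) (Hm : 0 < m) (Ht : 0 < tau) (Hk : 0 < k) (Hg : 0 < gamma) :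
  (forall x y, 0 < x -> x < y ->
     phi alpha m tau k gamma x < phi alpha m tau k gamma y) /\
  (forall (N : nat) (lam lam' : nat -> R), (2 <= N)%nat ->
     connected_laplacian_spectrum N lam ->
     connected_laplacian_spectrum N lam' ->
     (forall n, (1 <= n <= N)%nat -> lam n <= lam' n) ->
     h2_dapi_sq alpha m tau k gamma N lam <= h2_dapi_sq alpha m tau k gamma N lam' /\
     h2_std_sq alpha m N lam = alpha / (2 * m) * INR (N - 1) /\
     h2_std_sq alpha m N lam' = alpha / (2 * m) * INR (N - 1)).
Proof.
  split; [apply phi_mono; assumption|].
  intros N lam lam' HN [_ [Hp _]] [_ [Hp' _]] Hle.
  assert (Hstd : forall l : nat -> R, h2_std_sq alpha m N l = alpha / (2 * m) * INR (N - 1)).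
  { intro l. unfold h2_std_sq, sum_f, phi_std. rewrite sum_const_aux.
    f_equal. f_equal. lia. }
  split; [|split; apply Hstd].
  unfold h2_dapi_sq, sum_f. apply sum_Rle. intros n Hn.
  assert (H1 : (2 <= n + 2 <= N)%nat) by lia.
  destruct (Rle_lt_or_eq_dec _ _ (Hle (n+2)%nat ltac:(lia))) as [L|E].
  - left. apply phi_mono; auto.
  - rewrite E. lra.
Qed.
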